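(* Let $X$ be a triangulable space, $G$ a subgroup of $\operatorname{Homeo}(X)$, $\varphi:X\to\mathbb{R}^k$ continuous, and $(\bar C,\partial)$ a $G$-chain subcomplex of the singular chain complex $(S(X),\partial)$ over a field $\mathbb{K}$ satisfying property $( * )$. Let $\bar\varphi$ be the filtering function on $\bar C$ induced by $\varphi$. Then for every $n\in\mathbb{Z}$ and every $u,v\in\mathbb{R}^k$ with $u\prec v$, the persistent Betti number $\rho^{\bar\varphi}_n(u,v)$ of $(\bar C,\partial)$ with respect to $\bar\varphi$ is finite.
   Context: Order on $\mathbb{R}^k$: $u\preceq v$ iff $u_j\le v_j$ for all $j$; $u\prec v$ iff $u_j<v_j$ for all $j$. $X^{\varphi\preceq u}=\{x\in X:\varphi(x)\preceq u\}$. $G\subseteq\operatorname{Homeo}(X)$ acts on $S(X)$ by $g(\sigma)=g\circ\sigma$ on singular simplices, extended linearly. A $G$-chain subcomplex $\bar C$ of $S(X)$ is a chain subcomplex such that each $g\in G$ restricts to a chain isomorphism $\bar C\to\bar C$. For a subspace $Y\subseteq X$, $\bar C\cap S(Y)$ denotes the chain complex whose $n$-chains are the singular $n$-chains in $Y$ belonging to $\bar C_n$. Property $( * )$: whenever $X',X''$ are closed subsets of $X$ with $X'\subseteq\operatorname{int}(X'')$, there is a subspace $\hat X$ with $X'\subseteq\hat X\subseteq X''$ such that $H_n(\bar C\cap S(\hat X))$ is finitely generated for every $n\ge 0$. Induced filtering function: $\bar\varphi(0)=(-\infty,\ldots,-\infty)$; for a non-null chain $c=\sum_{r=1}^m a^r\sigma_{j_r}$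 written in reduced form (distinct singular simplices, all $a^r\neq0$), $\bar\varphi(c)=(u_1,\ldots,u_k)$ where $u_i$ is the maximum of $\varphi_i$ on $\bigcup_r\sigma_{j_r}(\Delta_n)$. For $u\prec v$, $\rho^{\bar\varphi}_n(u,v)$ is the rank of the image of $H_n(\bar C^{\bar\varphi\preceq u})\to H_n(\bar C^{\bar\varphi\preceq v})$ induced by inclusion, where $\bar C^{\bar\varphi\preceq u}_n=\{c\in\bar C_n:\bar\varphi(c)\preceq u\}$ (equivalently $\bar C\cap S(X^{\varphi\preceq u})$). *)

(* Defs.v *)
From Stdlib Require Import Reals ClassicalEpsilon.
From HB Require Import structures.
From mathcomp Require Import all_boot all_algebra.

Set Implicit Arguments.
Unset Strict Implicit.
Unset Printing Implicit Defensive.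

Definition eucl_open_in (I : finType) (P : (I -> R) -> Prop)
  (U : (I -> R) -> Prop) : Prop :=
  forall t, P t -> U t ->
    exists eps, Rlt 0 eps /\
      forall s, P s -> (forall j, Rlt (Rabs (Rminus (s j) (t j))) eps) -> U s.

Definition Rsum (I : finType) (t : I -> R) : R := \big[Rplus/R0]_(j : I) t j.

Definition in_simplex (I : finType) (t : I -> R) : Prop :=
  (forall j, Rle R0 (t j)) /\ Rsum t = R1.

Definition Delta (n : nat) := {t : 'I_n.+1 -> R | in_simplex t}.

(* the face map delta_i : R^{n+1} -> R^{n+2}, inserting 0 at position i *)
Definition insert0 (n : nat) (i : 'I_n.+2) (t : 'I_n.+1 -> R) : 'I_n.+2 -> R :=
  fun j => match unlift i j with Some j' => t j' | None => R0 end.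

(* points of the polyhedron |Kc| of a finite abstract simplicial complex Kc
   on the vertex set V (barycentric coordinates) *)
Definition poly_pt (V : finType) (Kc : {set {set V}}) (t : V -> R) : Prop :=
  in_simplex t /\ exists S, S \in Kc /\ forall v, t v <> R0 -> v \in S.

Definition is_simplicial_complex (V : finType) (Kc : {set {set V}}) : Prop :=
  forall S, S \in Kc -> forall S' : {set V}, S' \subset S -> S' != set0 -> S' \in Kc.

Definition decP (P : Prop) : bool :=
  if excluded_middle_informative P then true else false.

Section Space.
Variable X : Type.
Variable openX : (X -> Prop) -> Prop.

Definition is_topology : Prop :=
  openX (fun _ => True) /\ openX (fun _ => False) /\
  (forall F : (X -> Prop) -> Prop, (forall U, F U -> openX U) ->
      openX (fun x => exists U, F U /\ U x)) /\
  (forall U W, openX U -> openX W -> openX (fun x => U x /\ W x)).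

Definition closedX (Y : X -> Prop) : Prop := openX (fun x => ~ Y x).

Definition interiorX (Y : X -> Prop) (x : X) : Prop :=
  exists U, openX U /\ U x /\ forall y, U y -> Y y.

Definition contX (g : X -> X) : Prop :=
  forall U, openX U -> openX (fun x => U (g x)).

Definition is_homeo (g : X -> X) : Prop :=
  contX g /\ exists h, contX h /\ (forall x, h (g x) = x) /\ (forall x, g (h x) = x).

Definition is_subgroup_Homeo (G : (X -> X) -> Prop) : Prop :=
  (forall g, G g -> is_homeo g) /\ G (fun x => x) /\
  (forall g h, G g -> G h -> G (fun x => g (h x))) /\
  (forall g, G g -> exists h, G h /\ (forall x, h (g x) = x) /\ (forall x, g (h x) = x)).

Definition triangulable : Prop :=
  exists (V : finType) (Kc : {set {set V}}) (h : X -> V -> R) (hi : (V -> R) -> X),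
    is_simplicial_complex Kc /\
    (forall x, poly_pt Kc (h x)) /\
    (forall x, hi (h x) = x) /\
    (forall t, poly_pt Kc t -> h (hi t) = t) /\
    (forall U, eucl_open_in (poly_pt Kc) U -> openX (fun x => U (h x))) /\
    (forall W, openX W -> eucl_open_in (poly_pt Kc) (fun t => W (hi t))).

Definition cont_Rk (k : nat) (phi : X -> 'I_k -> R) : Prop :=
  forall U, eucl_open_in (fun _ => True) U -> openX (fun x => U (phi x)).

Definition sing_cont (n : nat) (s : Delta n -> X) : Prop :=
  forall W, openX W -> forall t : Delta n, W (s t) ->
    exists eps, Rlt 0 eps /\ forall t' : Delta n,
      (forall j, Rlt (Rabs (Rminus (proj1_sig t' j) (proj1_sig t j))) eps) -> W (s t').

Definition Sing (n : nat) := {s : Delta n -> X | sing_cont s}.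

Definition is_face (n : nat) (i : 'I_n.+2) (sg : Sing n.+1) (tau : Sing n) : Prop :=
  forall (t : Delta n) (s : Delta n.+1),
    proj1_sig s = insert0 i (proj1_sig t) -> proj1_sig tau t = proj1_sig sg s.

Variable K : fieldType.

(* n-chains over K: coefficient functions (finite support is imposed separately) *)
Definition Chain (n : nat) := Sing n -> K.

Definition finsupp (n : nat) (c : Chain n) : Prop :=
  exists s : seq (Sing n), forall sg, c sg <> 0%R -> List.In sg s.

Definition supp (n : nat) (c : Chain n) : seq (Sing n) :=
  epsilon (inhabits [::])
    (fun s => List.NoDup s /\ forall sg, c sg <> 0%R -> List.In sg s).

Definition bd (n : nat) (c : Chain n.+1) : Chain n :=
  fun tau => (\sum_(i < n.+2) (-1) ^+ i *
               \sum_(sg <- supp c) (if decP (is_face i sg tau) then c sg else 0))%R.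

Definition is_cycle (n : nat) : Chain n -> Prop :=
  match n as m return Chain m -> Prop with
  | 0 => fun _ => True
  | m.+1 => fun c => bd c = (fun _ => 0%R)
  end.

(* action of g on chains: g(sum a_r sigma_r) = sum a_r (g o sigma_r) *)
Definition push (g : X -> X) (n : nat) (c : Chain n) : Chain n :=
  fun tau => (\sum_(sg <- supp c)
     (if decP (forall t, proj1_sig tau t = g (proj1_sig sg t)) then c sg else 0))%R.

Definition is_chain_subcomplex (Cb : forall n, Chain n -> Prop) : Prop :=
  forall n,
    Cb n (fun _ => 0%R) /\
    (forall c d, Cb n c -> Cb n d -> Cb n (fun sg => c sg + d sg)%R) /\
    (forall (a : K) c, Cb n c -> Cb n (fun sg => a * c sg)%R) /\
    (forall c, Cb n c -> finsupp c) /\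
    (forall c : Chain n.+1, Cb n.+1 c -> Cb n (bd c)).

(* each g in G restricts to a chain isomorphism Cb -> Cb *)
Definition is_G_subcomplex (G : (X -> X) -> Prop) (Cb : forall n, Chain n -> Prop) : Prop :=
  is_chain_subcomplex Cb /\
  forall g, G g -> forall n,
    (forall c, Cb n c -> Cb n (push g c)) /\
    (forall c c', Cb n c -> Cb n c' -> push g c = push g c' -> c = c') /\
    (forall d, Cb n d -> exists c, Cb n c /\ push g c = d) /\
    (forall c : Chain n.+1, Cb n.+1 c -> bd (push g c) = push g (bd c)).

Definition restrict (Cb : forall n, Chain n -> Prop) (Y : X -> Prop) :
  forall n, Chain n -> Prop :=
  fun n c => Cb n c /\ forall sg, c sg <> 0%R -> forall t, Y (proj1_sig sg t).

(* A ⊆ B chain subcomplexes: the image of H_n(A) -> H_n(B) is finite-dimensional,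
   i.e. finitely many n-cycles of A span every n-cycle of A modulo boundaries of B. *)
Definition finite_image (A B : forall n, Chain n -> Prop) (n : nat) : Prop :=
  exists (m : nat) (zs : 'I_m -> Chain n),
    (forall i, A n (zs i) /\ is_cycle (zs i)) /\
    forall z, A n z -> is_cycle z ->
      exists (a : 'I_m -> K) (b : Chain n.+1),
        B n.+1 b /\ forall tau, z tau = (\sum_(i < m) a i * zs i tau + bd b tau)%R.

Definition property_star (Cb : forall n, Chain n -> Prop) : Prop :=
  forall X' X'' : X -> Prop, closedX X' -> closedX X'' ->
    (forall x, X' x -> interiorX X'' x) ->
    exists Yh : X -> Prop, (forall x, X' x -> Yh x) /\ (forall x, Yh x -> X'' x) /\
      forall n, finite_image (restrict Cb Yh) (restrict Cb Yh) n.

End Space.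

Definition sublevel (X : Type) (k : nat) (phi : X -> 'I_k -> R) (u : 'I_k -> R) : X -> Prop :=
  fun x => forall j, Rle (phi x j) (u j).

(* Main.v *)
Require Import Defs.
From Stdlib Require Import Reals ClassicalEpsilon Classical FunctionalExtensionality PropExtensionality Lra.
From HB Require Import structures.
From mathcomp Require Import all_boot all_algebra ring.
Set Implicit Arguments. Unset Strict Implicit. Unset Printing Implicit Defensive.
Import GRing.Theory.

Section Eq.
Variables (X : Type) (openX : (X -> Prop) -> Prop) (n : nat).
Definition sing_eqb (x y : Sing openX n) : bool := Defs.decP (x = y).
Lemma sing_eqP : Equality.axiom sing_eqb.
Proof. move=> x y; rewrite /sing_eqb /Defs.decP; case: excluded_middle_informative => h; constructor => //. Qed.
HB.instance Definition _ := hasDecEq.Build (Sing openX n) sing_eqP.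
End Eq.

Lemma In_mem (T : eqType) (x : T) s : List.In x s <-> x \in s.
Proof. elim: s => [|y s IH] //=; rewrite in_cons; split.
- case=> [->|/IH ->]; [by rewrite eqxx | by rewrite orbT].
- case/orP => [/eqP ->|/IH]; auto.
Qed.

Lemma NoDup_uniq (T : eqType) (s : seq T) : List.NoDup s <-> uniq s.
Proof. elim: s => [|y s IH] /=; first by split => // _; constructor.
split.
- move=> h; inversion h; subst; apply/andP; split; last by apply/IH.
  by apply/negP => /In_mem.
- case/andP => /negP h1 /IH h2; constructor => //; by move/In_mem.
Qed.

Lemma sum_indep (T : eqType) (K : fieldType) (F : T -> K) (L1 L2 : seq T) :
  uniq L1 -> uniq L2 -> (forall x, (F x != 0)%R -> x \in L1 /\ x \in L2) ->
  (\sum_(x <- L1) F x = \sum_(x <- L2) F x)%R.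
Proof.
move=> u1 u2 h.
have E : forall L, (\sum_(x <- L) F x = \sum_(x <- [seq x <- L | F x != 0%R]) F x)%R.
  move=> L; rewrite big_filter [RHS]big_mkcond /=; apply: eq_bigr => x _.
  by case: (boolP (F x == 0%R)) => [/eqP ->|].
rewrite (E L1) (E L2); apply: perm_big.
apply: uniq_perm; try by apply: filter_uniq.
move=> x; rewrite !mem_filter; case: (boolP (F x != 0%R)) => //= nz.
by case: (h x nz) => -> ->.
Qed.

Section Lin.
Variables (X : Type) (openX : (X -> Prop) -> Prop) (K : fieldType).

Lemma supp_spec n (c : Chain openX K n) : finsupp c ->
  List.NoDup (supp c) /\ forall sg, c sg <> 0%R -> List.In sg (supp c).
Proof.
case=> s hs; rewrite /supp.
apply: (@epsilon_spec _ (inhabits ([::] : seq (Sing openX n)))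
  (fun s => List.NoDup s /\ forall sg, c sg <> 0%R -> List.In sg s)).
exists (undup s); split; first by apply/NoDup_uniq; apply: undup_uniq.
by move=> sg /hs /In_mem h; apply/In_mem; rewrite mem_undup.
Qed.

Lemma sum_supp n (c : Chain openX K n) (L : seq (Sing openX n)) (F : Sing openX n -> K) :
  finsupp c -> uniq L -> (forall sg, c sg <> 0%R -> sg \in L) ->
  (forall sg, c sg = 0%R -> F sg = 0%R) ->
  (\sum_(sg <- supp c) F sg = \sum_(sg <- L) F sg)%R.
Proof.
move=> fs uL hL hF; have [nd hin] := supp_spec fs.
apply: sum_indep => //; first by apply/NoDup_uniq.
move=> x nz; have cx : c x <> 0%R by move=> e; move: nz; rewrite hF ?eqxx.
by split; [apply/In_mem; apply: hin | apply: hL].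
Qed.

Lemma bd_lin n (c1 c2 : Chain openX K n.+1) (a : K) tau :
  finsupp c1 -> finsupp c2 ->
  bd (fun sg => c1 sg + a * c2 sg)%R tau = (bd c1 tau + a * bd c2 tau)%R.
Proof.
move=> f1 f2; case: (f1) => s1 h1; case: (f2) => s2 h2.
set L := undup (s1 ++ s2).
have uL : uniq L by apply: undup_uniq.
have i1 : forall sg, c1 sg <> 0%R -> sg \in L.
  by move=> sg /h1 /In_mem; rewrite mem_undup mem_cat => ->.
have i2 : forall sg, c2 sg <> 0%R -> sg \in L.
  by move=> sg /h2 /In_mem; rewrite mem_undup mem_cat => ->; rewrite orbT.
have f3 : finsupp (fun sg => c1 sg + a * c2 sg)%R.
  exists L => sg nz; apply/In_mem.
  case: (classic (c1 sg = 0%R)) => e1; last by apply: i1.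
  case: (classic (c2 sg = 0%R)) => e2; last by apply: i2.
  by exfalso; apply: nz; rewrite e1 e2 mulr0 addr0.
have i3 : forall sg, (c1 sg + a * c2 sg)%R <> 0%R -> sg \in L.
  move=> sg nz.
  case: (classic (c1 sg = 0%R)) => e1; last by apply: i1.
  case: (classic (c2 sg = 0%R)) => e2; last by apply: i2.
  by exfalso; apply: nz; rewrite e1 e2 mulr0 addr0.
rewrite /bd mulr_sumr -big_split /=; apply: eq_bigr => i _.
rewrite (sum_supp f3 uL i3); last first.
  by move=> sg ->; case: (Defs.decP _).
rewrite (sum_supp f1 uL i1); last first.
  by move=> sg ->; case: (Defs.decP _).
rewrite (sum_supp f2 uL i2); last first.
  by move=> sg ->; case: (Defs.decP _).
rewrite !mulr_sumr -big_split /=; apply: eq_bigr => sg _.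
case: (Defs.decP _); last by rewrite !mulr0 addr0.
by rewrite mulrDr mulrCA.
Qed.
End Lin.
Section Red.
Local Open Scope ring_scope.

Lemma sumB_r (K : fieldType) m (x y w : 'I_m -> K) (r : K) :
  \sum_(i < m) (x i - r * y i) * w i = \sum_(i < m) x i * w i - r * \sum_(i < m) y i * w i.
Proof. rewrite mulr_sumr -sumrB; apply: eq_bigr => i _; by rewrite mulrBl mulrA. Qed.

Lemma reduce (T : Type) (K : fieldType) (S Bd : (T -> K) -> Prop)
  (hBd : forall e1 e2 r, Bd e1 -> Bd e2 -> Bd (fun t => e1 t - r * e2 t)) :
  forall m (zs : 'I_m -> T -> K) p (ws : 'I_p -> T -> K),
  (forall j, S (ws j)) ->
  (forall z, S z -> exists (c : 'I_p -> K) (a : 'I_m -> K) e, Bd e /\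
     forall t, z t = \sum_(j < p) c j * ws j t + \sum_(i < m) a i * zs i t + e t) ->
  exists p' (ws' : 'I_p' -> T -> K), (forall j, S (ws' j)) /\
    forall z, S z -> exists (c : 'I_p' -> K) e, Bd e /\
      forall t, z t = \sum_(j < p') c j * ws' j t + e t.
Proof.
elim=> [|m IH] zs p ws hS hrep.
  exists p, ws; split => // z /hrep [c [a [e [he ht]]]]; exists c, e; split => // t.
  by rewrite ht big_ord0 addr0.
pose zs' := fun i : 'I_m => zs (widen_ord (leqnSn m) i).
case: (classic (exists z0 (c0 : 'I_p -> K) (a0 : 'I_m.+1 -> K) e0,
   S z0 /\ Bd e0 /\ a0 ord_max != 0 /\
   forall t, z0 t = \sum_(j < p) c0 j * ws j t + \sum_(i < m.+1) a0 i * zs i t + e0 t)).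
- case=> z0 [c0 [a0 [e0 [Sz0 [Be0 [nz ht0]]]]]].
  pose ws' := fun j : 'I_p.+1 => if unlift ord_max j is Some j' then ws j' else z0.
  apply: (IH zs' p.+1 ws').
    by move=> j; rewrite /ws'; case: unlift.
  move=> z /hrep [c [a [e [he ht]]]].
  pose r := a ord_max / a0 ord_max.
  exists (fun j => if unlift ord_max j is Some j' then c j' - r * c0 j' else r).
  exists (fun i => a (widen_ord (leqnSn m) i) - r * a0 (widen_ord (leqnSn m) i)).
  exists (fun t => e t - r * e0 t); split; first exact: hBd.
  move=> t; rewrite ht big_ord_recr /= big_ord_recr /= /ws' unlift_none.
  have wl : forall q (j : 'I_q), widen_ord (leqnSn q) j = lift ord_max j.
    by move=> q j; apply: val_inj; rewrite /= /bump leqNgt ltn_ord.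
  have E1 : forall j : 'I_p, unlift ord_max (widen_ord (leqnSn p) j) = Some j.
    by move=> j; rewrite wl liftK.
  rewrite [in RHS](eq_bigr (fun j => (c j - r * c0 j) * ws j t)); last by move=> j _; rewrite E1.
  rewrite sumB_r (ht0 t) big_ord_recr /= sumB_r /zs'.
  have ha : a ord_max = r * a0 ord_max by rewrite /r divfK.
  rewrite ha; ring.
- move=> nex; apply: (IH zs' p ws) => // z Sz.
  have [c [a [e [he ht]]]] := hrep z Sz.
  have a0 : a ord_max = 0.
    apply/eqP; apply/negPn/negP => nz; apply: nex.
    by exists z, c, a, e.
  exists c, (fun i => a (widen_ord (leqnSn m) i)), e; split => // t.
  by rewrite ht big_ord_recr /= a0 mul0r addr0.
Qed.

End Red.

Lemma bigmin_le (I : eqType) (F : I -> R) (r : seq I) j :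
  j \in r -> Rle (\big[Rmin/R1]_(i <- r) F i) (F j).
Proof.
elim: r => [|x r IH] //; rewrite in_cons big_cons => /orP [/eqP ->|/IH h].
  by apply: Rmin_l.
by apply: Rle_trans h; apply: Rmin_r.
Qed.

Lemma bigmin_pos (I : Type) (F : I -> R) (r : seq I) :
  (forall j, Rlt 0 (F j)) -> Rlt 0 (\big[Rmin/R1]_(i <- r) F i).
Proof.
move=> h; elim: r => [|x r IH]; first by rewrite big_nil; lra.
by rewrite big_cons; apply: Rmin_glb_lt.
Qed.

Theorem mainTheorem2 (X : Type) (openX : (X -> Prop) -> Prop) (K : fieldType)
  (G : (X -> X) -> Prop) (k : nat) (phi : X -> 'I_k -> R)
  (Cb : forall n, Chain openX K n -> Prop) :
  is_topology openX ->
  triangulable openX ->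
  is_subgroup_Homeo openX G ->
  cont_Rk openX phi ->
  is_G_subcomplex G Cb ->
  property_star Cb ->
  forall (n : nat) (u v : 'I_k -> R), (forall j, Rlt (u j) (v j)) ->
    finite_image (restrict Cb (sublevel phi u)) (restrict Cb (sublevel phi v)) n.
Proof.
move=> _ _ _ hcont hG hstar n u v huv.
have [hsub _] := hG.
pose w j := Rdiv (Rplus (u j) (v j)) 2.
have uw : forall j, Rlt (u j) (w j) by move=> j; have := huv j; rewrite /w; lra.
have wv : forall j, Rle (w j) (v j) by move=> j; have := huv j; rewrite /w; lra.
have closed_sub : forall a, closedX openX (sublevel phi a).
  move=> a; rewrite /closedX.
  have -> : (fun x => ~ sublevel phi a x) = (fun x => (fun y => exists j, Rlt (a j) (y j)) (phi x)).
    apply: functional_extensionality => x; apply: propositional_extensionality.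
    rewrite /sublevel; split.
      move=> h; apply: NNPP => h'; apply: h => j; apply: Rnot_lt_le => hl; apply: h'.
      by exists j.
    by case=> j hj h; have := h j; lra.
  apply: (hcont (fun y => exists j, Rlt (a j) (y j))) => t _ [j hj]; exists (Rminus (t j) (a j)); split; first lra.
  move=> s _ hs; exists j; have := hs j; move/Rabs_def2; lra.
have int : forall x, sublevel phi u x -> interiorX openX (sublevel phi w) x.
  move=> x hx; exists (fun y => forall j, Rlt (phi y j) (w j)); split; last split.
  - apply: (hcont (fun y => forall j, Rlt (y j) (w j))) => t _ ht.
    pose eps := \big[Rmin/R1]_(i < k) (Rminus (w i) (t i)).
    exists eps; split.
      by apply: bigmin_pos => j; have := ht j; lra.
    move=> s _ hs j; have := hs j; move/Rabs_def2 => [h1 h2].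
    have hb : Rle eps (Rminus (w j) (t j)).
      by apply: (bigmin_le (fun i => Rminus (w i) (t i))); rewrite mem_index_enum.
    lra.
  - by move=> j; have := hx j; have := uw j; lra.
  - by move=> y hy j; apply: Rlt_le.
have [Yh [h1 [h2 hfin]]] := hstar _ _ (closed_sub u) (closed_sub w) int.
have [m [zs [hzs hrep]]] := hfin n.
pose S := fun z : Chain openX K n => restrict Cb (sublevel phi u) z /\ is_cycle z.
pose Bd := fun e : Chain openX K n =>
  exists b : Chain openX K n.+1, restrict Cb (sublevel phi v) b /\ forall t, e t = bd b t.
have [| | |p [ws [hS hw]]] := @reduce (Sing openX n) K S Bd _ m zs 0 (fun _ _ => 0%R) _ _.
- move=> e1 e2 r [b1 [[hb1 s1] he1]] [b2 [[hb2 s2] he2]].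
  have [_ [hadd [hscale [hfs _]]]] := hsub n.+1.
  exists (fun sg => b1 sg + (- r) * b2 sg)%R; split; first split.
  + by apply: hadd => //; apply: hscale.
  + move=> sg nz; case: (classic (b1 sg = 0%R)) => e1z; last by apply: s1.
    case: (classic (b2 sg = 0%R)) => e2z; last by apply: s2.
    by exfalso; apply: nz; rewrite e1z e2z mulr0 addr0.
  + move=> t /=; rewrite bd_lin; [|exact: hfs|exact: hfs]; by rewrite he1 he2 mulNr.
- by case.
- move=> z [[hz sz] cz].
  have zY : restrict Cb Yh z by split => // sg nz t; apply: h1; apply: sz.
  have [a [b [[hb sb] ht]]] := hrep z zY cz.
  exists (fun _ => 0%R), a, (bd b); split.
    exists b; split => //; split => // sg nz t j.
    by apply: Rle_trans (wv j); apply: h2; apply: sb.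
  by move=> t; rewrite ht big_ord0 add0r.
- exists p, ws; split; first by move=> j; have [[? ?] ?] := hS j.
  move=> z hz cz; have [c [e [[b [hb he]] ht]]] := hw z (conj hz cz).
  by exists c, b; split => // tau; rewrite ht he.
Qed.
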